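(* For any $\alpha\in(0,1)$ and any $q>0$ there exist positive definite $2\times2$ matrices $A,B$ such that $LE_\alpha(A,B)\not\le\mathcal{A}_{\alpha,q}(A,B)$, where $LE_\alpha(A,B):=\exp((1-\alpha)\log A+\alpha\log B)$ and $\mathcal{A}_{\alpha,q}(A,B):=((1-\alpha)A^q+\alpha B^q)^{1/q}$.
   Context: $\le$ denotes the Loewner order on Hermitian matrices ($X\le Y$ iff $Y-X$ is positive semidefinite). *)

(* Defs.v *)
From HB Require Import structures.
From mathcomp Require Import all_boot all_order all_algebra.
From mathcomp Require Import complex.
From mathcomp Require Import boolp reals sequences exp.
Set Implicit Arguments. Unset Strict Implicit. Unset Printing Implicit Defensive.
Import Order.TTheory GRing.Theory Num.Theory.
Local Open Scope ring_scope.
Local Open Scope complex_scope.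

Section MatrixFunctions.
Variables (R : realType) (n : nat).
Local Notation C := R[i].

Definition adjmx (A : 'M[C]_n) : 'M[C]_n := (map_mx (@conjc R) A)^T.

Definition hermitian (A : 'M[C]_n) : Prop := adjmx A = A.

(* positive semidefinite / positive definite (Hermitian) matrices;
   in the ordered field C, 0 <= z means z is real and nonnegative *)
Definition psd (A : 'M[C]_n) : Prop :=
  hermitian A /\ forall v : 'cV[C]_n, 0 <= ((map_mx (@conjc R) v)^T *m A *m v) 0 0.

Definition posdef (A : 'M[C]_n) : Prop :=
  hermitian A /\ forall v : 'cV[C]_n, v != 0 ->
    0 < ((map_mx (@conjc R) v)^T *m A *m v) 0 0.

Definition loewner_le (X Y : 'M[C]_n) : Prop := psd (Y - X).

Definition unitarymx (U : 'M[C]_n) : Prop := U *m adjmx U = 1%:M.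

Definition spectral_decomp (A : 'M[C]_n) (U : 'M[C]_n) (d : 'rV[R]_n) : Prop :=
  unitarymx U /\ A = U *m diag_mx (map_mx (real_complex R) d) *m adjmx U.

(* Functional calculus: f(A) := U diag(f(d_i)) U^* for a spectral
   decomposition of the Hermitian matrix A (the result does not depend on
   the chosen decomposition); 0 if A has no such decomposition. *)
Definition mxfun (f : R -> R) (A : 'M[C]_n) : 'M[C]_n :=
  match pselect (exists p : 'M[C]_n * 'rV[R]_n, spectral_decomp A p.1 p.2) with
  | left H => let p := proj1_sig (cid H) in
      p.1 *m diag_mx (map_mx (fun x => real_complex R (f x)) p.2) *m adjmx p.1
  | right _ => 0
  end.

Definition mxexp (A : 'M[C]_n) := mxfun (@expR R) A.
Definition mxlog (A : 'M[C]_n) := mxfun (@ln R) A.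
Definition mxpow (q : R) (A : 'M[C]_n) := mxfun (fun x => powR x q) A.

Definition LEmean (alpha : R) (A B : 'M[C]_n) : 'M[C]_n :=
  mxexp (real_complex R (1 - alpha) *: mxlog A + real_complex R alpha *: mxlog B).

Definition powmean (alpha q : R) (A B : 'M[C]_n) : 'M[C]_n :=
  mxpow (1 / q) (real_complex R (1 - alpha) *: mxpow q A
                 + real_complex R alpha *: mxpow q B).

End MatrixFunctions.

(* Main.v *)
Require Import Defs.
From HB Require Import structures.
From mathcomp Require Import all_boot all_order all_algebra.
From mathcomp Require Import complex.
From mathcomp Require Import boolp reals sequences exp.
From mathcomp Require spectral sesquilinear.
From mathcomp Require Import ring lra.
Set Implicit Arguments. Unset Strict Implicit. Unset Printing Implicit Defensive.
Import Order.TTheory GRing.Theory Num.Theory.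
Local Open Scope ring_scope.
Local Open Scope complex_scope.

Section Gen.
Variables (R : realType) (n : nat).
Local Notation C := R[i].

Lemma conjCE (x : C) : Num.conj x = conjc x.
Proof.
rewrite {1}[x]Crect -complexRe -complexIm. rewrite rmorphD rmorphM /=.
rewrite conjCi !conj_Creal ?complex_real //.
case: x => a b /=. simpc. by [].
Qed.

Lemma adjmxK (A : 'M[C]_n) : adjmx (adjmx A) = A.
Proof. by apply/matrixP => i j; rewrite !mxE conjcK. Qed.

Lemma adjmxM (A B : 'M[C]_n) : adjmx (A *m B) = adjmx B *m adjmx A.
Proof. by rewrite /adjmx map_mxM trmx_mul. Qed.

Lemma unitary_l (U : 'M[C]_n) : Defs.unitarymx U -> adjmx U *m U = 1%:M.
Proof. by move=> /mulmx1C. Qed.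

Definition Fd (U : 'M[C]_n) (g : 'I_n -> R) : 'M[C]_n :=
  U *m diag_mx (\row_j (g j)%:C) *m adjmx U.

Lemma Fd_ext U g h : (forall j, g j = h j) -> Fd U g = Fd U h.
Proof. by move=> e; rewrite /Fd; congr (_ *m diag_mx _ *m _); apply/rowP => j; rewrite !mxE e. Qed.

Lemma Fd_add U g h : Fd U g + Fd U h = Fd U (fun j => g j + h j).
Proof.
rewrite /Fd -mulmxDl -mulmxDr; congr (_ *m _ *m _).
by apply/matrixP => i j; rewrite !mxE -mulrnDl rmorphD.
Qed.

Lemma Fd_scale U c g : c%:C *: Fd U g = Fd U (fun j => c * g j).
Proof.
rewrite /Fd scalemxAl scalemxAr; congr (_ *m _ *m _).
by apply/matrixP => i j; rewrite !mxE mulrnAr rmorphM.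
Qed.

Lemma Fd_mul U g h : Defs.unitarymx U -> Fd U g *m Fd U h = Fd U (fun j => g j * h j).
Proof.
move=> uU; rewrite /Fd !mulmxA -[_ *m adjmx U *m U]mulmxA unitary_l // mulmx1.
rewrite -[U *m _ *m _]mulmxA mulmx_diag; congr (_ *m _ *m _).
by apply/matrixP => i j; rewrite !mxE rmorphM.
Qed.

Lemma Fd_one U : Defs.unitarymx U -> Fd U (fun _ => 1) = 1%:M.
Proof.
move=> uU; rewrite /Fd.
have -> : diag_mx (\row_j (1:R)%:C) = 1%:M :> 'M[C]_n.
  by apply/matrixP => i j; rewrite !mxE.
by rewrite mulmx1.
Qed.

Lemma Fd_diag U g i : (forall j, 0 <= g j) -> (0:C) <= Fd U g i i.
Proof.
move=> g0; rewrite /Fd mul_mx_diag !mxE; apply: sumr_ge0 => j _.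
by rewrite !mxE mulrAC; apply: mulr_ge0; [exact: mulcJ_ge0 | rewrite ler0c].
Qed.


Definition Dg (f : R -> R) (d : 'rV[R]_n) : 'M[C]_n :=
  diag_mx (map_mx (fun x => (f x)%:C) d).

Lemma Dg_comm f (d e : 'rV[R]_n) (W : 'M[C]_n) :
  Dg id d *m W = W *m Dg id e -> Dg f d *m W = W *m Dg f e.
Proof.
move=> h; apply/matrixP => i j; move/matrixP: h => /(_ i j).
rewrite /Dg !mul_diag_mx !mul_mx_diag !mxE /=.
have [->|Wn0] := eqVneq (W i j) 0; first by move=> _; rewrite mulr0 mul0r.
rewrite [W i j * _]mulrC => /(mulIf Wn0) /complexI ->; by rewrite mulrC.
Qed.

Lemma decomp_unique f (A U V : 'M[C]_n) (d e : 'rV[R]_n) :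
  spectral_decomp A U d -> spectral_decomp A V e ->
  U *m Dg f d *m adjmx U = V *m Dg f e *m adjmx V.
Proof.
move=> [uU eA] [uV eB].
have UU := unitary_l uU; have VV := unitary_l uV.
pose W := adjmx U *m V.
have DW : Dg id d *m W = W *m Dg id e.
  have h1 : adjmx U *m A *m V = Dg id d *m W.
    by rewrite eA /W !mulmxA UU mul1mx -!mulmxA.
  have h2 : adjmx U *m A *m V = W *m Dg id e.
    by rewrite eB /W -!mulmxA VV mulmx1 mulmxA.
  by rewrite -h1 -h2.
have DfW := Dg_comm f DW.
rewrite -[LHS]mulmx1 -uV !mulmxA -[U *m _ *m _ *m V]mulmxA.
rewrite -[U *m _ *m (_ *m V)]mulmxA -/W DfW.
by rewrite /W !mulmxA uU mul1mx.
Qed.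

Lemma mxfunE f (A U : 'M[C]_n) (d : 'rV[R]_n) :
  spectral_decomp A U d -> mxfun f A = U *m Dg f d *m adjmx U.
Proof.
move=> hd; rewrite /mxfun; case: pselect => [H|H]; last first.
  by exfalso; apply: H; exists (U, d).
case: (cid H) => [[V e] /= he].
by rewrite -(decomp_unique f he hd).
Qed.


Lemma tC_adj (A : 'M[C]_n) : (A ^t Num.conj)%sesqui = adjmx A.
Proof. by apply/matrixP => i j; rewrite !mxE conjCE. Qed.

Lemma herm_decomp (A : 'M[C]_n) : Defs.hermitian A -> exists p : 'M[C]_n * 'rV[R]_n, spectral_decomp A p.1 p.2.
Proof.
move=> hA.
have hAt : (A ^t Num.conj)%sesqui = A by rewrite tC_adj.
have nA : A \is spectral.normalmx by rewrite qualifE hAt.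
have hermA : A \is @sesquilinear.hermitianmx C n false Num.conj.
  by apply/sesquilinear.is_hermitianmxP; rewrite expr0 scale1r hAt.
have /spectral.orthomx_spectralP eA := nA.
have uP := spectral.spectral_unitarymx A.
have rsp := spectral.hermitian_spectral_diag_real hermA.
move: eA; rewrite spectral.invmx_unitary // tC_adj => eA.
exists (adjmx (spectral.spectralmx A), map_mx (@complex.Re R) (spectral.spectral_diag A)) => /=.
split.
  rewrite /Defs.unitarymx adjmxK; apply: mulmx1C.
  by move/spectral.unitarymxP: uP; rewrite tC_adj.
rewrite adjmxK {1}eA; congr (_ *m diag_mx _ *m _).
apply/matrixP => i j; rewrite !mxE RRe_real //.
by move/mxOverP: rsp; apply.
Qed.


Lemma Fd_herm U g : Defs.hermitian (Fd U g).
Proof.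
rewrite /Defs.hermitian /Fd !adjmxM adjmxK mulmxA; congr (_ *m _ *m _).
apply/matrixP => i j; rewrite !mxE.
have [->|ij] := eqVneq i j; first by rewrite !mulr1n conjc_real.
by rewrite !mulr0n conjc0.
Qed.

Lemma qform_Fd U g (v : 'cV[C]_n) :
  ((map_mx (@conjc R) v)^T *m Fd U g *m v) 0 0 =
  \sum_j (conjc ((adjmx U *m v) j 0) * (g j)%:C * (adjmx U *m v) j 0).
Proof.
have e : (map_mx (@conjc R) v)^T *m U = (map_mx (@conjc R) (adjmx U *m v))^T.
  rewrite map_mxM trmx_mul /adjmx; congr (_ *m _).
  by apply/matrixP => i j; rewrite !mxE; exact/esym/conjcK.
rewrite /Fd !mulmxA e -mulmxA -[adjmx U *m v]/(adjmx U *m v).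
rewrite mul_mx_diag !mxE; apply: eq_bigr => j _; rewrite !mxE.
by [].
Qed.

Lemma Fd_posdef U g : Defs.unitarymx U -> (forall j, 0 < g j) -> posdef (Fd U g).
Proof.
move=> uU g0; split; first exact: Fd_herm.
move=> v vn0; rewrite qform_Fd.
set y := adjmx U *m v.
have yn0 : y != 0.
  apply: contraNneq vn0 => y0.
  by rewrite -[v]mul1mx -uU -mulmxA -/y y0 mulmx0.
have [k yk] : exists k, y k 0 != 0.
  apply/existsP; apply: contraNT yn0; rewrite negb_exists => /forallP h.
  apply/eqP/matrixP => i j; rewrite ord1; move: (h i); rewrite negbK => /eqP ->; by rewrite mxE.
have tge0 j : (0:C) <= conjc (y j 0) * (g j)%:C * y j 0.
  rewrite mulrAC; apply: mulr_ge0; last by rewrite ler0c ltW.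
  by rewrite mulrC mulcJ_ge0.
rewrite (bigD1 k) //=.
apply: (@lt_le_trans _ _ (conjc (y k 0) * (g k)%:C * y k 0)); last first.
  by rewrite lerDl; apply: sumr_ge0 => j _; apply: tge0.
rewrite mulrAC [conjc _ * _]mulrC -sqr_normc; apply: mulr_gt0; last by rewrite ltcR.
by rewrite exprn_gt0 // normr_gt0.
Qed.

Lemma psd_diag (X : 'M[C]_n) i : psd X -> (0:C) <= X i i.
Proof.
move=> [_ h]; have := h (delta_mx i 0).
have -> : map_mx (@conjc R) (delta_mx i 0) = delta_mx i 0 :> 'cV[C]_n.
  by apply/matrixP => a b; rewrite !mxE conjc_nat.
by rewrite trmx_delta -rowE -colE !mxE.
Qed.

End Gen.


Section Two.
Variable R : realType.
Local Notation C := R[i].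

Definition cm (X : 'M[R]_2) : 'M[C]_2 := map_mx (real_complex R) X.
Definition mx2 (a b c d : R) : 'M[R]_2 :=
  \matrix_(i, j) (if i == 0 then (if j == 0 then a else b) else (if j == 0 then c else d)).
Definition rotm (c s : R) := mx2 c (- s) s c.

Lemma ord2 (i : 'I_2) : i = 0 \/ i = 1.
Proof. by case: i => [[|[|k]] Hk]; [left; apply: val_inj | right; apply: val_inj | ]. Qed.

Lemma mx2_mul a b c d a' b' c' d' :
  mx2 a b c d *m mx2 a' b' c' d' =
  mx2 (a * a' + b * c') (a * b' + b * d') (c * a' + d * c') (c * b' + d * d').
Proof.
apply/matrixP => i j; rewrite !mxE !big_ord_recl big_ord0 /= !mxE /=.
by case: (ord2 i) => ->; case: (ord2 j) => ->; rewrite /= addr0.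
Qed.

Lemma cm_mul X Y : cm X *m cm Y = cm (X *m Y).
Proof. by rewrite /cm map_mxM. Qed.

Lemma cm_lin a b X Y : a%:C *: cm X + b%:C *: cm Y = cm (a *: X + b *: Y).
Proof. by apply/matrixP => i j; rewrite !mxE rmorphD !rmorphM. Qed.

Lemma mx2_lin a b x1 x2 x3 x4 y1 y2 y3 y4 :
  a *: mx2 x1 x2 x3 x4 + b *: mx2 y1 y2 y3 y4 =
  mx2 (a * x1 + b * y1) (a * x2 + b * y2) (a * x3 + b * y3) (a * x4 + b * y4).
Proof.
apply/matrixP => i j; rewrite !mxE.
by case: (ord2 i) => ->; case: (ord2 j) => ->.
Qed.

Lemma mx2_one : 1%:M = mx2 1 0 0 1.
Proof.
apply/matrixP => i j; rewrite !mxE.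
by case: (ord2 i) => ->; case: (ord2 j) => ->.
Qed.

Lemma cm_one : cm 1%:M = 1%:M.
Proof. by rewrite /cm map_mx1. Qed.

Lemma adj_cm X : adjmx (cm X) = cm X^T.
Proof. by apply/matrixP => i j; rewrite !mxE conjc_real. Qed.

Lemma rot_unitary c s : c ^+ 2 + s ^+ 2 = 1 -> Defs.unitarymx (cm (rotm c s)).
Proof.
move=> h; rewrite /Defs.unitarymx adj_cm cm_mul -cm_one; congr cm.
rewrite mx2_one /rotm; apply/matrixP => i j; rewrite !mxE !big_ord_recl big_ord0 /= !mxE /=.
case: (ord2 i) => ->; case: (ord2 j) => -> /=; rewrite addr0; lra.
Qed.


Lemma diag_cm (g : 'I_2 -> R) : diag_mx (\row_j (g j)%:C) = cm (mx2 (g 0) 0 0 (g 1)).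
Proof.
apply/matrixP => i j; rewrite !mxE.
by case: (ord2 i) => ->; case: (ord2 j) => ->.
Qed.

Lemma rotE c s (g : 'I_2 -> R) :
  Fd (cm (rotm c s)) g = cm (mx2 (c ^+ 2 * g 0 + s ^+ 2 * g 1) (c * s * (g 0 - g 1))
                               (c * s * (g 0 - g 1)) (s ^+ 2 * g 0 + c ^+ 2 * g 1)).
Proof.
rewrite /Fd diag_cm adj_cm !cm_mul /rotm.
have -> : (mx2 c (- s) s c)^T = mx2 c s (- s) c.
  by apply/matrixP => i j; rewrite !mxE; case: (ord2 i) => ->; case: (ord2 j) => ->.
rewrite !mx2_mul; congr (cm (mx2 _ _ _ _)); ring.
Qed.

Lemma Fd1 (g : 'I_2 -> R) : Fd 1%:M g = cm (mx2 (g 0) 0 0 (g 1)).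
Proof. by rewrite /Fd diag_cm -cm_one adj_cm trmx1 !cm_mul mul1mx mulmx1. Qed.

Lemma unitary1 : Defs.unitarymx (1%:M : 'M[C]_2).
Proof. by rewrite /Defs.unitarymx -cm_one adj_cm trmx1 cm_mul mulmx1. Qed.

Lemma Fd_decomp (U : 'M[C]_2) g : Defs.unitarymx U -> spectral_decomp (Fd U g) U (\row_j g j).
Proof.
move=> uU; split => //; rewrite /Fd; congr (_ *m diag_mx _ *m _).
by apply/matrixP => i j; rewrite !mxE.
Qed.

Lemma mxfun_Fd f (U : 'M[C]_2) g : Defs.unitarymx U -> mxfun f (Fd U g) = Fd U (fun j => f (g j)).
Proof.
move=> uU; rewrite (mxfunE f (Fd_decomp g uU)) /Fd /Dg; congr (_ *m diag_mx _ *m _).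
by apply/matrixP => i j; rewrite !mxE.
Qed.

Lemma cm_entry X i j : cm X i j = (X i j)%:C.
Proof. by rewrite mxE. Qed.

End Two.


Section Ineq.
Variable R : realType.

Lemma key_ineq (al q u1 u2 l E eps g11 g12 g22 : R) :
  0 < al -> al < 1 -> 0 < q -> 0 < u1 -> 0 < u2 -> 1/2 <= u1 ^+ 2 ->
  0 <= l -> l <= E - 1 -> 0 < eps -> eps < 1 ->
  (1 - al) * (E - 1) * (u1 * u2) = al * (1 - eps) * (3/5 * (4/5)) ->
  (2 / (1 - al)) * (3 + (2 + ((3 * q)^-1) ^+ 3) /
      (((3 * q)^-1) ^+ 3 * (al ^+ 2 * eps ^+ 2 * (3/5) ^+ 2 * (4/5) ^+ 2))) <= l ->
  g11 = 1 + ((1 - al) * l * u1 ^+ 2 - al * (3/5) ^+ 2) / (3 * q) ->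
  g12 = ((1 - al) * l * (u1 * u2) - al * (3/5 * (4/5))) / (3 * q) ->
  g22 = 1 + ((1 - al) * l * u2 ^+ 2 - al * (4/5) ^+ 2) / (3 * q) ->
  1 < g12 ^+ 2 * (g11 + 2 * g22) + g22 ^+ 3.
Proof.
move=> a0 a1 q0 u10 u20 u1h l0 lE e0 e1 hE hl -> -> ->.
set h := (3 * q)^-1.
set rho := al ^+ 2 * eps ^+ 2 * (3/5) ^+ 2 * (4/5) ^+ 2.
have h0 : 0 < h by rewrite invr_gt0; lra.
have rho0 : 0 < rho by rewrite /rho; apply: mulr_gt0; [apply: mulr_gt0; [apply: mulr_gt0|]|];
  rewrite ?exprn_gt0 //; lra.
set r := (1 - al) * l * (u1 * u2) - al * (3/5 * (4/5)).
set p := (1 - al) * l * u1 ^+ 2 - al * (3/5) ^+ 2.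
set s := (1 - al) * l * u2 ^+ 2 - al * (4/5) ^+ 2.
have hq : forall x, x / (3 * q) = h * x by move=> x; rewrite mulrC.
rewrite !hq.
have rle : r <= - (al * eps * (3/5 * (4/5))).
  have : (1 - al) * l * (u1 * u2) <= (1 - al) * (E - 1) * (u1 * u2).
    apply: ler_pM; [|by apply: mulr_ge0; lra | |by []].
      by apply: mulr_ge0; lra.
    by apply: ler_pM; lra.
  rewrite hE /r; lra.
have r2 : rho <= r ^+ 2.
  have : 0 <= al * eps * (3/5 * (4/5)) by apply: mulr_ge0; [apply: mulr_ge0|]; lra.
  move=> hh; rewrite /rho.
  have -> : al ^+ 2 * eps ^+ 2 * (3 / 5) ^+ 2 * (4 / 5) ^+ 2 = (al * eps * (3/5 * (4/5))) ^+ 2 by ring.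
  rewrite -[r ^+ 2]sqrrN !expr2; apply: ler_pM; lra.
have sge : -1 <= s.
  have : 0 <= (1 - al) * l * u2 ^+ 2 by apply: mulr_ge0; [apply: mulr_ge0|]; rewrite ?sqr_ge0; lra.
  rewrite /s; lra.
have pge : (1 - al) * l / 2 - 1 <= p.
  have : (1 - al) * l / 2 <= (1 - al) * l * u1 ^+ 2.
    have hh : 0 <= (1 - al) * l by apply: mulr_ge0; lra.
    have := ler_wpM2l hh u1h; rewrite -mulrA; lra.
  rewrite /p; lra.
set K := (2 + h ^+ 3) / (h ^+ 3 * rho).
have K0 : 0 < K.
  rewrite /K; apply: divr_gt0; first by rewrite ltr_wpDr // ?exprn_ge0 ?ltW.
  by apply: mulr_gt0; rewrite // exprn_gt0.
have hlK : h * ((1 - al) * l / 2) >= 3 * h + h * K.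
  have : 3 + K <= (1 - al) * l / 2.
    move: hl; rewrite -/K => hl.
    have a1' : 0 < 1 - al by lra.
    have -> : (1 - al) * l / 2 = l / (2 / (1 - al)) by field; lra.
    rewrite ler_pdivlMr; first by rewrite mulrC.
    by apply: divr_gt0; lra.
  move=> hh; have := ler_wpM2l (ltW h0) hh; lra.
have sum_ge : 3 + h * K <= 1 + h * p + 2 * (1 + h * s).
  have := ler_wpM2l (ltW h0) pge.
  have := ler_wpM2l (ltW h0) sge.
  lra.
have hKe : h * K * (h ^+ 2 * rho) = 2 + h ^+ 3.
  rewrite /K; field; apply/andP; split; rewrite ?expf_neq0 //; lra.
have t1 : 2 + h ^+ 3 <= (h * r) ^+ 2 * (1 + h * p + 2 * (1 + h * s)).
  rewrite -hKe exprMn.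
  have hK0 : 0 <= h * K by apply: mulr_ge0; lra.
  have : h * K <= 1 + h * p + 2 * (1 + h * s) by lra.
  move=> hh.
  rewrite [h * K * _]mulrC; apply: ler_pM => //.
    by apply: mulr_ge0; rewrite ?exprn_ge0 // ltW.
  by apply: ler_wpM2l; rewrite ?exprn_ge0 // ltW.
have t2 : - h ^+ 3 < (1 + h * s) ^+ 3.
  have g22ge : 1 - h <= 1 + h * s.
    have := ler_wpM2l (ltW h0) sge.
    lra.
  have c1 : (1 - h) ^+ 3 <= (1 + h * s) ^+ 3.
    have e : forall x y : R, y ^+ 3 - x ^+ 3 = (y - x) * ((y + x / 2) ^+ 2 + 3 / 4 * x ^+ 2).
      by move=> x y; field.
    rewrite -subr_ge0 e.
    apply: mulr_ge0; first lra.
    by apply: addr_ge0; rewrite ?sqr_ge0 // mulr_ge0 ?sqr_ge0 //; lra.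
  have c2 : - h ^+ 3 < (1 - h) ^+ 3.
    rewrite -subr_gt0.
    have e : forall h : R, (1 - h) ^+ 3 - - h ^+ 3 = 3 * (h - 1/2) ^+ 2 + 1/4 by move=> ?; field.
    rewrite e.
    apply: ltr_wpDl; first by apply: mulr_ge0; [lra | exact: sqr_ge0].
    lra.
  lra.
lra.
Qed.

End Ineq.


Section Facts.
Variable R : realType.

Lemma cube_le (y z : R) : y <= z -> y ^+ 3 <= z ^+ 3.
Proof.
move=> yz.
have e : forall x y : R, y ^+ 3 - x ^+ 3 = (y - x) * ((y + x / 2) ^+ 2 + 3 / 4 * x ^+ 2).
  by move=> x y'; field.
rewrite -subr_ge0 e; apply: mulr_ge0; first lra.
apply: addr_ge0; first exact: sqr_ge0.
by apply: mulr_ge0; [lra | exact: sqr_ge0].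
Qed.

Lemma exp3 (x : R) : (1 + x / 3) ^+ 3 <= expR x.
Proof.
have -> : expR x = expR (x / 3) ^+ 3.
  by rewrite -expRM_natr; congr expR; field.
exact: (cube_le (expR_ge1Dx (x / 3))).
Qed.

Lemma powR_le1 (x p : R) : x <= 1 -> 0 <= p -> powR x p <= 1.
Proof.
move=> x1 p0; have [xn|xp] := ltP x 0; first by rewrite lt0_powR1.
have := @ge0_ler_powR R p p0 x 1; rewrite powR1; apply => //.
by rewrite nnegrE.
Qed.


Lemma params (al q : R) : 0 < al -> al < 1 -> 0 < q ->
  exists u1 u2 E : R,
    ([/\ 0 < u1, 0 < u2, u1 ^+ 2 + u2 ^+ 2 = 1, 1/2 <= u1 ^+ 2 & 3 * u2 <= 4 * u1] /\
    [/\ 1 < E,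
        (1 - al) * (E - 1) * (u1 * u2) = al * (1 - expR (-1)) * (3/5 * (4/5)) &
        (2 / (1 - al)) * (3 + (2 + ((3 * q)^-1) ^+ 3) /
          (((3 * q)^-1) ^+ 3 * (al ^+ 2 * expR (-1) ^+ 2 * (3/5) ^+ 2 * (4/5) ^+ 2))) <= ln E]).
Proof.
move=> a0 a1 q0.
set l0 := (2 / (1 - al)) * _.
set c := al * (1 - expR (-1)) * (3/5 * (4/5)).
have e1 : expR (-1) < 1 :> R by rewrite -[X in _ < X]expR0 ltr_expR; lra.
have c0 : 0 < c.
  by rewrite /c; apply: mulr_gt0; [apply: mulr_gt0|]; lra.
have a1' : 0 < 1 - al by lra.
set t0 := c / ((1 - al) * expR l0).
have t00 : 0 < t0 by apply: divr_gt0 => //; apply: mulr_gt0; rewrite ?expR_gt0.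
set m := t0 / (4 * (1 + t0)).
have m0 : 0 < m by apply: divr_gt0; lra.
have m14 : m <= 1/4.
  rewrite /m ler_pdivrMr; last lra.
  lra.
have m2t : 2 * m <= t0.
  have -> : 2 * m = t0 / (2 * (1 + t0)) by rewrite /m; field; lra.
  rewrite ler_pdivrMr; last lra.
  have : 0 <= t0 * t0 by apply: mulr_ge0; lra.
  lra.
have mm0 : 0 < 1 + m ^+ 2 by have := sqr_ge0 m; lra.
set u1 := (1 - m ^+ 2) / (1 + m ^+ 2).
set u2 := 2 * m / (1 + m ^+ 2).
have msq : m ^+ 2 <= 1/16.
  rewrite expr2; have : m * m <= 1/4 * m by apply: ler_wpM2r; lra.
  lra.
have u10 : 0 < u1 by apply: divr_gt0; lra.
have u20 : 0 < u2 by apply: divr_gt0; lra.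
have tau0 : 0 < u1 * u2 by apply: mulr_gt0.
have taule : u1 * u2 <= t0.
  apply: (le_trans _ m2t).
  rewrite /u1 /u2.
  have -> : (1 - m ^+ 2) / (1 + m ^+ 2) * (2 * m / (1 + m ^+ 2)) =
            2 * m * ((1 - m ^+ 2) / (1 + m ^+ 2) ^+ 2).
    by field; lra.
  rewrite -[X in _ <= X]mulr1; apply: ler_wpM2l; first lra.
  rewrite ler_pdivrMr; last by rewrite exprn_gt0.
  have := sqr_ge0 m; have := sqr_ge0 (m ^+ 2).
  rewrite mul1r !expr2; nra.
pose E := 1 + c / ((1 - al) * (u1 * u2)).
have E1 : 1 < E.
  rewrite /E ltrDl; apply: divr_gt0 => //; exact: mulr_gt0.
exists u1, u2, E; split; first split => //.
- by rewrite /u1 /u2; field; lra.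
- rewrite /u1 expr_div_n ler_pdivlMr; last by rewrite exprn_gt0.
  have := sqr_ge0 m; rewrite !expr2; nra.
- rewrite -subr_ge0.
  have -> : 4 * u1 - 3 * u2 = (4 - 4 * m ^+ 2 - 6 * m) / (1 + m ^+ 2).
    by rewrite /u1 /u2; field; lra.
  apply: divr_ge0; lra.
split => //.
- by rewrite /E addrAC subrr add0r; field; rewrite !lt0r_neq0.
- have El : expR l0 <= E - 1.
    rewrite /E addrAC subrr add0r ler_pdivlMr; last exact: mulr_gt0.
    move: taule; rewrite /t0 ler_pdivlMr; last by apply: mulr_gt0; rewrite ?expR_gt0.
    move=> h.
    have -> : expR l0 * ((1 - al) * (u1 * u2)) = u1 * u2 * ((1 - al) * expR l0) by ring.
    exact: h.
  rewrite -ler_expR lnK; last by rewrite posrE; lra.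
  lra.
Qed.

End Facts.


Section Aux.
Variable R : realType.
Local Notation C := R[i].

Lemma sel0 (x y : R) : (if (0 : 'I_2) == 0 then x else y) = x.
Proof. by []. Qed.
Lemma sel1 (x y : R) : (if (1 : 'I_2) == 0 then x else y) = y.
Proof. by []. Qed.

Lemma mx2_tr (a b d : R) : (mx2 a b b d)^T = mx2 a b b d.
Proof. by apply/matrixP => i j; rewrite !mxE; case: (ord2 i) => ->; case: (ord2 j) => ->. Qed.

Lemma mx2_11 (a b c d : R) : mx2 a b c d 1 1 = d.
Proof. by rewrite mxE. Qed.
Lemma mx2_00 (a b c d : R) : mx2 a b c d 0 0 = a.
Proof. by rewrite mxE. Qed.
Lemma mx2_01 (a b c d : R) : mx2 a b c d 0 1 = b.
Proof. by rewrite mxE. Qed.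

Lemma mxsubE (X Y : 'M[C]_2) i j : (X - Y) i j = X i j - Y i j.
Proof. by rewrite !mxE. Qed.

End Aux.

Theorem theorem4p5 (R : realType) (alpha q : R) :
  0 < alpha < 1 -> 0 < q ->
  exists A B : 'M[R[i]]_2,
    posdef A /\ posdef B /\ ~ loewner_le (LEmean alpha A B) (powmean alpha q A B).
Proof.
move=> /andP[a0 a1] q0.
have [u1 [u2 [E [[u10 u20 uu u1h uw] [E1 hE hl]]]]] := params a0 a1 q0.
pose a := expR (ln E / q).
pose b := expR (- q^-1).
pose gA : 'I_2 -> R := fun j => if j == 0 then a else 1.
pose gB : 'I_2 -> R := fun j => if j == 0 then b else 1.
pose Ua := cm (rotm u1 u2).
pose Ub := cm (rotm (3/5 : R) (4/5)).
have uA : Defs.unitarymx Ua by apply: rot_unitary.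
have uB : Defs.unitarymx Ub by apply: rot_unitary; field.
have E0 : 0 < E by lra.
exists (Fd Ua gA), (Fd Ub gB).
split; first by apply: Fd_posdef => // j; rewrite /gA; case: ifP; rewrite ?expR_gt0.
split; first by apply: Fd_posdef => // j; rewrite /gB; case: ifP; rewrite ?expR_gt0.
move=> hpsd.
have logA : mxlog (Fd Ua gA) = cm (mx2 (u1 ^+ 2 * (ln E / q) + u2 ^+ 2 * 0) (u1 * u2 * (ln E / q - 0))
                                        (u1 * u2 * (ln E / q - 0)) (u2 ^+ 2 * (ln E / q) + u1 ^+ 2 * 0)).
  by rewrite /mxlog mxfun_Fd // rotE /gA /= ln1 /a expRK.
have logB : mxlog (Fd Ub gB) = cm (mx2 ((3/5) ^+ 2 * (- q^-1) + (4/5) ^+ 2 * 0) (3/5 * (4/5) * (- q^-1 - 0))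
                                        (3/5 * (4/5) * (- q^-1 - 0)) ((4/5) ^+ 2 * (- q^-1) + (3/5) ^+ 2 * 0)).
  by rewrite /mxlog mxfun_Fd // rotE /gB /= ln1 /b expRK.
have powA : mxpow q (Fd Ua gA) = cm (mx2 (u1 ^+ 2 * E + u2 ^+ 2 * 1) (u1 * u2 * (E - 1))
                                        (u1 * u2 * (E - 1)) (u2 ^+ 2 * E + u1 ^+ 2 * 1)).
  rewrite /mxpow mxfun_Fd // rotE /gA /= powR1.
  have -> : a `^ q = E by rewrite /a -expRM divfK ?lnK ?posrE //; apply: lt0r_neq0.
  by [].
have powB : mxpow q (Fd Ub gB) = cm (mx2 ((3/5) ^+ 2 * expR (-1) + (4/5) ^+ 2 * 1) (3/5 * (4/5) * (expR (-1) - 1))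
                                        (3/5 * (4/5) * (expR (-1) - 1)) ((4/5) ^+ 2 * expR (-1) + (3/5) ^+ 2 * 1)).
  rewrite /mxpow mxfun_Fd // rotE /gB /= powR1.
  have -> : b `^ q = expR (-1) by rewrite /b -expRM mulNr mulVf //; lra.
  by [].
set la := mx2 _ _ _ _ in logA.
set lb := mx2 _ _ _ _ in logB.
set pa := mx2 _ _ _ _ in powA.
set pb := mx2 _ _ _ _ in powB.
move: hpsd; rewrite /loewner_le /LEmean /powmean logA logB powA powB !cm_lin.
set M22 := (1 - alpha) * (u2 ^+ 2 * E + u1 ^+ 2 * 1) + alpha * ((4/5) ^+ 2 * expR (-1) + (3/5) ^+ 2 * 1).
set M11 := (1 - alpha) * (u1 ^+ 2 * E + u2 ^+ 2 * 1) + alpha * ((3/5) ^+ 2 * expR (-1) + (4/5) ^+ 2 * 1).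
have eM : (1 - alpha) *: pa + alpha *: pb = mx2 M11 0 0 M22.
  have e0 : (1 - alpha) * (u1 * u2 * (E - 1)) + alpha * (3 / 5 * (4 / 5) * (expR (-1) - 1)) = 0.
    rewrite (_ : (1 - alpha) * (u1 * u2 * (E - 1)) = (1 - alpha) * (E - 1) * (u1 * u2)); last by ring.
    by rewrite hE; ring.
  by rewrite /pa /pb mx2_lin e0.
have hM : cm (mx2 M11 0 0 M22) = Fd 1%:M (fun j => if j == 0 then M11 else M22).
  by rewrite Fd1.
rewrite eM hM /mxpow mxfun_Fd; last exact: unitary1.
rewrite Fd1 /=.
set Sr := (1 - alpha) *: la + alpha *: lb.
rewrite /mxexp => hpsd.
have hS : Defs.hermitian (cm Sr) by rewrite /Defs.hermitian adj_cm /Sr /la /lb mx2_lin mx2_tr.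
have [[V e] /= hd] := herm_decomp hS.
have uV : Defs.unitarymx V by case: hd.
have SF : cm Sr = Fd V (fun j => e 0 j).
  case: hd => _ ->; rewrite /Fd; congr (_ *m diag_mx _ *m _).
  by apply/matrixP => i j; rewrite ord1 !mxE.
have LEF : mxfun expR (cm Sr) = Fd V (fun j => expR (e 0 j)).
  rewrite (mxfunE expR hd) /Dg /Fd; congr (_ *m diag_mx _ *m _).
  by apply/matrixP => i j; rewrite ord1 !mxE.
rewrite LEF in hpsd.
set Gr := 1 *: (1%:M : 'M[R]_2) + (1/3) *: Sr.
pose g j := 1 * 1 + 1/3 * e 0 j.
have GF : cm Gr = Fd V g.
  by rewrite -cm_lin cm_one SF -(Fd_one uV) !Fd_scale Fd_add.
have G3F : cm (Gr *m Gr *m Gr) = Fd V (fun j => g j * g j * g j).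
  by rewrite -!cm_mul GF !Fd_mul.
have Dge : (0 : R[i]) <= (Fd V (fun j => expR (e 0 j)) - cm (Gr *m Gr *m Gr)) 1 1.
  have -> : - cm (Gr *m Gr *m Gr) = (-1)%:C *: cm (Gr *m Gr *m Gr) by rewrite rmorphN1 scaleN1r.
  rewrite G3F Fd_scale Fd_add; apply: Fd_diag => j.
  have := exp3 (e 0 j).
  have -> : g j * g j * g j = (1 + e 0 j / 3) ^+ 3 by rewrite /g; field.
  lra.
have Pd := psd_diag 1 hpsd.
rewrite mxsubE cm_entry mx2_11 in Pd.
rewrite mxsubE cm_entry in Dge.
have hfin : (0 : R[i]) <= (M22 `^ (1 / q) - (Gr *m Gr *m Gr) 1 1)%:C.
  rewrite rmorphB /=.
  have := addr_ge0 Pd Dge.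
  by rewrite addrA subrK.
move: hfin; rewrite ler0c subr_ge0.
have eps0 : 0 < expR (-1) :> R by apply: expR_gt0.
have eps1 : expR (-1) < 1 :> R by rewrite -[X in _ < X]expR0 ltr_expR; lra.
have M22le : M22 <= 1.
  have id : u1 * (M22 - 1) = u2 * ((1 - alpha) * (E - 1) * (u1 * u2))
       + u1 * (1 - alpha) * (u1 ^+ 2 + u2 ^+ 2 - 1) - u1 * alpha * (16/25) * (1 - expR (-1)).
    by rewrite /M22; field.
  rewrite hE uu subrr mulr0 addr0 in id.
  have id2 : u1 * (M22 - 1) = (alpha * (1 - expR (-1))) * (12/25 * u2 - 16/25 * u1).
    by rewrite id; field.
  have : u1 * (M22 - 1) <= 0.
    rewrite id2; apply: mulr_ge0_le0; last lra.
    by apply: mulr_ge0; lra.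
  rewrite pmulr_rle0 //; lra.
have P1 : M22 `^ (1 / q) <= 1.
  by apply: powR_le1 => //; apply: divr_ge0; lra.
have lE0 : 0 <= ln E by apply: ln_ge0; lra.
have lE1 : ln E <= E - 1.
  have := expR_ge1Dx (ln E); rewrite lnK ?posrE //; lra.
have K := key_ineq (g11 := 1 * 1 + 1/3 * Sr 0 0) (g12 := 1 * 0 + 1/3 * Sr 0 1)
  (g22 := 1 * 1 + 1/3 * Sr 1 1) a0 a1 q0 u10 u20 u1h lE0 lE1 eps0 eps1 hE hl.
have eSr : Sr = mx2 ((1 - alpha) * (u1 ^+ 2 * (ln E / q) + u2 ^+ 2 * 0) +
     alpha * ((3 / 5) ^+ 2 * - q^-1 + (4 / 5) ^+ 2 * 0))
   ((1 - alpha) * (u1 * u2 * (ln E / q - 0)) + alpha * (3 / 5 * (4 / 5) * (- q^-1 - 0)))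
   ((1 - alpha) * (u1 * u2 * (ln E / q - 0)) + alpha * (3 / 5 * (4 / 5) * (- q^-1 - 0)))
   ((1 - alpha) * (u2 ^+ 2 * (ln E / q) + u1 ^+ 2 * 0) +
     alpha * ((4 / 5) ^+ 2 * - q^-1 + (3 / 5) ^+ 2 * 0)).
  by rewrite /Sr /la /lb mx2_lin.
have qn0 : q != 0 by apply: lt0r_neq0.
rewrite eSr mx2_00 mx2_01 mx2_11 in K.
have hK := K.
move=> hle.
have := hK ltac:(field) ltac:(field) ltac:(field).
rewrite /Gr eSr mx2_one !mx2_lin !mx2_mul mx2_11 in hle.
have gen : forall x y z : R, (y * x + z * y) * y + (y * y + z * z) * z = y ^+ 2 * (x + 2 * z) + z ^+ 3.
  by move=> x y z; ring.
rewrite gen in hle.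
lra.
Qed.
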